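(* Let $E$ be an equational theory such that the variety $\mathsf{Alg}(E)$ of its models satisfies (IT) and is coherent. Then $\mathsf{Alg}^{op}_{fp}(E)$ is an $r$-regular category.
   Context: $\mathsf{Alg}^{op}_{fp}(E)$ is the opposite of the category of finitely presented $E$-algebras. A class of algebras satisfies (IT) (''injections are transferable'') if whenever $f:\mathcal A\to\mathcal B$ is a homomorphism and $g:\mathcal A\to\mathcal C$ is an injective homomorphism, there are a homomorphism $h:\mathcal C\to\mathcal E$ and an injective homomorphism $h':\mathcal B\to\mathcal E$ with $h'\circ f=h\circ g$. The variety is coherent if finitely generated subalgebras of finitely presented algebras are finitely presented. A category is $r$-regular if it has all finite limits, epimorphisms are stable under pullback, and every arrow factors as an epimorphism followed by a regular monomorphism. *)

(* Defs.v *)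
From mathcomp Require Import all_boot.
From Stdlib Require Import ProofIrrelevance.
From Stdlib Require List.

Set Implicit Arguments.
Unset Strict Implicit.
Unset Printing Implicit Defensive.

Record category := Category {
  Obj :> Type;
  Hom : Obj -> Obj -> Type;
  idm : forall A, Hom A A;
  comp : forall A B C, Hom B C -> Hom A B -> Hom A C;
  comp_id_l : forall A B (f : Hom A B), comp (idm B) f = f;
  comp_id_r : forall A B (f : Hom A B), comp f (idm A) = f;
  comp_assoc : forall A B C D (h : Hom C D) (g : Hom B C) (f : Hom A B),
      comp h (comp g f) = comp (comp h g) f
}.
Arguments Hom {c}.
Arguments idm {c}.
Arguments comp {c A B C}.

Definition op_category (C : category) : category.
Proof.
refine (@Category (Obj C) (fun A B => @Hom C B A) (fun A => idm A)
          (fun A B D g f => comp f g) _ _ _).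
- move=> A B f /=; exact: comp_id_r.
- move=> A B f /=; exact: comp_id_l.
- move=> A B D E h g f /=; by rewrite comp_assoc.
Defined.

Definition finite_type (T : Type) : Prop :=
  exists l : list T, forall x, List.In x l.

Definition finite_category (J : category) : Prop :=
  finite_type (Obj J) /\ forall a b : J, finite_type (Hom a b).

Record functor (J C : category) := Functor {
  Fobj :> J -> C;
  Fmap : forall a b : J, Hom a b -> Hom (Fobj a) (Fobj b);
  Fmap_id : forall a, Fmap (idm a) = idm (Fobj a);
  Fmap_comp : forall a b c (g : Hom b c) (f : Hom a b),
      Fmap (comp g f) = comp (Fmap g) (Fmap f)
}.
Arguments Fmap {J C} f0 {a b}.

Definition is_cone (J C : category) (D : functor J C) (X : C)
  (legs : forall j : J, Hom X (D j)) : Prop :=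
  forall (a b : J) (u : Hom a b), comp (Fmap D u) (legs a) = legs b.

Definition is_limit (J C : category) (D : functor J C) (L : C)
  (legs : forall j : J, Hom L (D j)) : Prop :=
  is_cone legs /\
  forall (X : C) (legs' : forall j : J, Hom X (D j)), is_cone legs' ->
    exists u : Hom X L,
      (forall j, comp (legs j) u = legs' j) /\
      (forall u' : Hom X L, (forall j, comp (legs j) u' = legs' j) -> u' = u).

Definition has_finite_limits (C : category) : Prop :=
  forall J : category, finite_category J ->
  forall D : functor J C, exists (L : C) (legs : forall j : J, Hom L (D j)),
    is_limit legs.

Definition epi (C : category) (A B : C) (f : Hom A B) : Prop :=
  forall (Z : C) (g h : Hom B Z), comp g f = comp h f -> g = h.

Definition is_equalizer (C : category) (A B Z : C) (g h : Hom B Z)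
  (m : Hom A B) : Prop :=
  comp g m = comp h m /\
  forall (X : C) (x : Hom X B), comp g x = comp h x ->
    exists u : Hom X A, comp m u = x /\
      (forall u' : Hom X A, comp m u' = x -> u' = u).

Definition regular_mono (C : category) (A B : C) (m : Hom A B) : Prop :=
  exists (Z : C) (g h : Hom B Z), is_equalizer g h m.

Definition is_pullback (C : category) (A B C1 P : C)
  (f : Hom A B) (g : Hom C1 B) (p1 : Hom P A) (p2 : Hom P C1) : Prop :=
  comp f p1 = comp g p2 /\
  forall (Q : C) (q1 : Hom Q A) (q2 : Hom Q C1), comp f q1 = comp g q2 ->
    exists u : Hom Q P, (comp p1 u = q1 /\ comp p2 u = q2) /\
      (forall u' : Hom Q P, comp p1 u' = q1 /\ comp p2 u' = q2 -> u' = u).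

Definition epis_pullback_stable (C : category) : Prop :=
  forall (A B C1 P : C) (f : Hom A B) (g : Hom C1 B) (p1 : Hom P A)
         (p2 : Hom P C1),
    epi f -> is_pullback f g p1 p2 -> epi p2.

Definition epi_regmono_factorization (C : category) : Prop :=
  forall (A B : C) (f : Hom A B), exists (I : C) (e : Hom A I) (m : Hom I B),
    epi e /\ regular_mono m /\ comp m e = f.

Definition r_regular (C : category) : Prop :=
  [/\ has_finite_limits C, epis_pullback_stable C &
      epi_regmono_factorization C].

Record signature := Signature { op_sym : Type; arity : op_sym -> nat }.

Inductive term (S : signature) (X : Type) : Type :=
| Var : X -> term S X
| App : forall o : op_sym S, ('I_(arity o) -> term S X) -> term S X.
Arguments Var {S X}.
Arguments App {S X}.

Record algebra (S : signature) := Algebra {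
  carrier :> Type;
  interp : forall o : op_sym S, ('I_(arity o) -> carrier) -> carrier
}.
Arguments interp {S} a o.

Fixpoint eval (S : signature) (A : algebra S) (X : Type) (v : X -> A)
  (t : term S X) : A :=
  match t with
  | Var x => v x
  | App o args => interp A o (fun i => eval v (args i))
  end.

Record eq_theory := EqTheory {
  th_sig : signature;
  th_axioms : term th_sig nat -> term th_sig nat -> Prop
}.

Definition satisfies (E : eq_theory) (A : algebra (th_sig E)) : Prop :=
  forall s t, th_axioms s t -> forall v : nat -> A, eval v s = eval v t.

Record model (E : eq_theory) := Model {
  model_alg :> algebra (th_sig E);
  model_sat : satisfies model_alg
}.

Definition is_hom (S : signature) (A B : algebra S) (f : A -> B) : Prop :=
  forall o (a : 'I_(arity o) -> A), f (interp A o a) = interp B o (fun i => f (a i)).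

Definition hom (S : signature) (A B : algebra S) := {f : A -> B | is_hom f}.

Definition hom_id (S : signature) (A : algebra S) : hom A A.
Proof. by exists (fun x => x). Defined.

Definition hom_comp (S : signature) (A B C : algebra S)
  (g : hom B C) (f : hom A B) : hom A C.
Proof.
exists (fun x => proj1_sig g (proj1_sig f x)).
move=> o a; rewrite (proj2_sig f) (proj2_sig g) //.
Defined.

(* A is finitely presented (relative to E): there are finitely many
   generators g and finitely many relations R such that A is the free
   E-algebra on the generators modulo R (universal property). *)
Definition fin_presented (E : eq_theory) (A : algebra (th_sig E)) : Prop :=
  exists (n : nat) (R : list (term (th_sig E) 'I_n * term (th_sig E) 'I_n))
         (g : 'I_n -> A),
    (forall p, List.In p R -> eval g p.1 = eval g p.2) /\
    forall (B : model E) (h : 'I_n -> B),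
      (forall p, List.In p R -> eval h p.1 = eval h p.2) ->
      exists f : hom A B,
        (forall i, proj1_sig f (g i) = h i) /\
        (forall f' : hom A B, (forall i, proj1_sig f' (g i) = h i) ->
           forall x, proj1_sig f' x = proj1_sig f x).

Definition op_closed (S : signature) (A : algebra S) (P : A -> Prop) : Prop :=
  forall o (a : 'I_(arity o) -> A), (forall i, P (a i)) -> P (interp A o a).

Definition subalgebra (S : signature) (A : algebra S) (P : A -> Prop)
  (HP : op_closed P) : algebra S :=
  @Algebra S {x : A | P x}
    (fun o a => exist P (interp A o (fun i => proj1_sig (a i)))
                  (HP o _ (fun i => proj2_sig (a i)))).

Definition fin_generated_pred (S : signature) (A : algebra S) (P : A -> Prop)
  : Prop :=
  exists (n : nat) (g : 'I_n -> A),
    forall x, P x <-> exists t : term S 'I_n, eval g t = x.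

Definition coherent (E : eq_theory) : Prop :=
  forall (A : model E), fin_presented A ->
  forall (P : A -> Prop) (HP : op_closed P),
    fin_generated_pred P -> fin_presented (subalgebra HP).

Definition IT (E : eq_theory) : Prop :=
  forall (A B C : model E) (f : hom A B) (g : hom A C),
    injective (proj1_sig g) ->
    exists (D : model E) (h : hom C D) (h' : hom B D),
      injective (proj1_sig h') /\
      forall x, proj1_sig h' (proj1_sig f x) = proj1_sig h (proj1_sig g x).

Definition fp_obj (E : eq_theory) := {A : model E | fin_presented A}.

Definition Alg_fp (E : eq_theory) : category.
Proof.
refine (@Category (fp_obj E)
          (fun A B => hom (proj1_sig A) (proj1_sig B))
          (fun A => hom_id _) (fun A B C g f => hom_comp g f) _ _ _).
- move=> A B [f hf]; rewrite /hom_comp /=; f_equal; exact: proof_irrelevance.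
- move=> A B [f hf]; rewrite /hom_comp /=; f_equal; exact: proof_irrelevance.
- move=> A B C D [h hh] [g hg] [f hf]; rewrite /hom_comp /=; f_equal;
    exact: proof_irrelevance.
Defined.

Definition Alg_fp_op (E : eq_theory) : category := op_category (Alg_fp E).

(* Main.v *)
Require Import Defs.
From mathcomp Require Import all_boot.
From Stdlib Require Import FunctionalExtensionality PropExtensionality IndefiniteDescription ProofIrrelevance.
From Stdlib Require List.

Set Implicit Arguments.
Unset Strict Implicit.
Unset Printing Implicit Defensive.


Definition cid := constructive_indefinite_description.

Section Terms.
Variable S : signature.

Fixpoint tbind (X Y : Type) (s : X -> term S Y) (t : term S X) : term S Y :=
  match t with
  | Var x => s x
  | App o a => App o (fun i => tbind s (a i))
  end.

Definition tmap (X Y : Type) (f : X -> Y) (t : term S X) : term S Y :=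
  tbind (fun x => Var (f x)) t.

Lemma eval_ext (A : algebra S) X (v w : X -> A) t :
  (forall x, v x = w x) -> eval v t = eval w t.
Proof.
move=> H; elim: t => [x|o a IH] /=; first by apply: H.
congr (interp A o); apply: functional_extensionality => i; exact: IH.
Qed.

Lemma eval_bind (A : algebra S) X Y (v : Y -> A) (s : X -> term S Y) t :
  eval v (tbind s t) = eval (fun x => eval v (s x)) t.
Proof.
elim: t => [x|o a IH] //=.
congr (interp A o); apply: functional_extensionality => i; exact: IH.
Qed.

Lemma eval_map (A : algebra S) X Y (v : Y -> A) (f : X -> Y) t :
  eval v (tmap f t) = eval (fun x => v (f x)) t.
Proof. by rewrite /tmap eval_bind. Qed.

Lemma hom_eval (A B : algebra S) (f : hom A B) X (v : X -> A) t :
  proj1_sig f (eval v t) = eval (fun x => proj1_sig f (v x)) t.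
Proof.
elim: t => [x|o a IH] //=.
rewrite (proj2_sig f); congr (interp B o); apply: functional_extensionality => i; exact: IH.
Qed.

Lemma hom_ext (A B : algebra S) (f g : hom A B) :
  (forall x, proj1_sig f x = proj1_sig g x) -> f = g.
Proof.
case: f g => [f hf] [g hg] /= H.
have E : f = g by apply: functional_extensionality.
subst g; f_equal; exact: proof_irrelevance.
Qed.

End Terms.

Section Free.
Variable E : eq_theory.
Notation S := (th_sig E).
Variable X : Type.
Variable Rel : term S X -> term S X -> Prop.

Inductive cong : term S X -> term S X -> Prop :=
| c_rel s t : Rel s t -> cong s t
| c_ax s t (sg : nat -> term S X) : @th_axioms E s t -> cong (tbind sg s) (tbind sg t)
| c_refl t : cong t t
| c_sym s t : cong s t -> cong t s
| c_trans s t u : cong s t -> cong t u -> cong s u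
| c_app o (a b : 'I_(arity o) -> term S X) :
    (forall i, cong (a i) (b i)) -> cong (App o a) (App o b).

Definition Q := {P : term S X -> Prop | exists t, P = cong t}.
Definition cls (t : term S X) : Q := exist _ (cong t) (ex_intro _ t erefl).
Definition rep (q : Q) : term S X := proj1_sig (cid (proj2_sig q)).

Lemma cls_rep q : cls (rep q) = q.
Proof.
rewrite /rep; case: (cid _) => t /= Ht.
case: q Ht => P HP /= Ht; subst P.
rewrite /cls; f_equal; exact: proof_irrelevance.
Qed.

Lemma cls_eq s t : cong s t -> cls s = cls t.
Proof.
move=> H; rewrite /cls.
have E1 : cong s = cong t.
  apply: functional_extensionality => u; apply: propositional_extensionality.
  split => Hu; [exact: c_trans (c_sym H) Hu | exact: c_trans H Hu].
move: (ex_intro _ s _) (ex_intro _ t _); rewrite E1 => p1 p2.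
f_equal; exact: proof_irrelevance.
Qed.

Lemma cls_cong s t : cls s = cls t -> cong s t.
Proof.
move=> H; have : proj1_sig (cls s) t by rewrite H /=; exact: c_refl.
by [].
Qed.

Lemma rep_cong t : cong (rep (cls t)) t.
Proof. apply: cls_cong; by rewrite cls_rep. Qed.

Definition Falg : algebra S :=
  @Algebra S Q (fun o a => cls (App o (fun i => rep (a i)))).

Lemma interp_cls o (a : 'I_(arity o) -> term S X) :
  interp Falg o (fun i => cls (a i)) = cls (App o a).
Proof. apply: cls_eq; apply: c_app => i; exact: rep_cong. Qed.

Lemma eval_cls Y (v : Y -> Q) t : eval (A := Falg) v t = cls (tbind (fun y => rep (v y)) t).
Proof.
elim: t => [y|o a IH] /=; first by rewrite cls_rep.
apply: cls_eq; apply: c_app => i; rewrite IH; exact: rep_cong.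
Qed.

Lemma eval_gen t : eval (A := Falg) (fun x => cls (Var x)) t = cls t.
Proof.
elim: t => [y|o a IH] //=.
apply: cls_eq; apply: c_app => i; rewrite IH; exact: rep_cong.
Qed.

Lemma Fsat : satisfies Falg.
Proof.
move=> s t Hst v; rewrite !eval_cls; apply: cls_eq; exact: c_ax.
Qed.

Definition Fmodel : model E := Model Fsat.

Lemma gen_rel s t : Rel s t ->
  eval (A := Falg) (fun x => cls (Var x)) s = eval (A := Falg) (fun x => cls (Var x)) t.
Proof. by move=> H; rewrite !eval_gen; apply: cls_eq; apply: c_rel. Qed.

Lemma cong_eval (B : model E) (h : X -> B) :
  (forall s t, Rel s t -> eval h s = eval h t) ->
  forall s t, cong s t -> eval h s = eval h t.
Proof.
move=> HR s t; elim => {s t}.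
- by move=> s t /HR.
- move=> s t sg Hax; rewrite !eval_bind; exact: (model_sat Hax).
- by [].
- by move=> s t _ ->.
- by move=> s t u _ -> _ ->.
- move=> o a b _ IH /=; congr (interp B o); apply: functional_extensionality => i; exact: IH.
Qed.

Lemma Funiv (B : model E) (h : X -> B) :
  (forall s t, Rel s t -> eval h s = eval h t) ->
  exists f : hom Falg B,
    (forall x, proj1_sig f (cls (Var x)) = h x) /\
    (forall f' : hom Falg B, (forall x, proj1_sig f' (cls (Var x)) = h x) ->
       forall y, proj1_sig f' y = proj1_sig f y).
Proof.
move=> HR.
have Hh : is_hom (A := Falg) (B := B) (fun q => eval h (rep q)).
  move=> o a /=.
  rewrite (cong_eval HR (rep_cong _)) /=; done.
exists (exist _ _ Hh); split => /=.
  by move=> x; rewrite (cong_eval HR (rep_cong _)).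
move=> f' Hf' y; rewrite -{1}(cls_rep y).
elim: (rep y) => [x|o a IH] /=; first exact: Hf'.
rewrite -interp_cls (proj2_sig f') /=.
congr (interp B o); apply: functional_extensionality => i; exact: IH.
Qed.

End Free.


Lemma seqIn (T : eqType) (x : T) (s : seq T) : x \in s -> List.In x s.
Proof.
elim: s => [|y s IH] //=; rewrite in_cons => /orP [/eqP ->|/IH]; by [left|right].
Qed.

Definition ord_list n : list 'I_n := ord_enum n.
Lemma ord_listP n (i : 'I_n) : List.In i (ord_list n).
Proof. apply: seqIn; exact: mem_ord_enum. Qed.

Lemma In_tnth (T : Type) (l : seq T) (x : T) :
  List.In x l -> exists i : 'I_(size l), tnth (in_tuple l) i = x.
Proof.
move=> H.
have [n [Hn Hx]] : exists n, n < size l /\ nth x l n = x.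
  elim: l H => [|y l IH] //= [->|/IH [n [Hn Hx]]]; first by exists 0.
  by exists n.+1.
exists (Ordinal Hn); by rewrite (tnth_nth x).
Qed.

Section Pres.
Variable E : eq_theory.
Notation S := (th_sig E).

Record Pres (A : algebra S) := MkPres {
  pn : nat;
  pR : list (term S 'I_pn * term S 'I_pn);
  pg : 'I_pn -> A;
  psat : forall p, List.In p pR -> eval pg p.1 = eval pg p.2;
  puniv : forall (B : model E) (h : 'I_pn -> B),
      (forall p, List.In p pR -> eval h p.1 = eval h p.2) ->
      exists f : hom A B,
        (forall i, proj1_sig f (pg i) = h i) /\
        (forall f' : hom A B, (forall i, proj1_sig f' (pg i) = h i) ->
           forall x, proj1_sig f' x = proj1_sig f x)
}.
Arguments pn {A} p0.
Arguments pR {A} p0.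
Arguments pg {A} p0 _.
Arguments psat {A} p0 _ _.
Arguments puniv {A} p0 B h _.

Lemma pres_of (A : algebra S) : fin_presented A -> Pres A.
Proof.
move=> H.
case: (cid H) => n H1; case: (cid H1) => R H2; case: (cid H2) => g [H3 H4].
exact: (@MkPres A n R g H3 H4).
Qed.

Lemma hom_unique (A : algebra S) (P : Pres A) (B : model E) (f1 f2 : hom A B) :
  (forall i, proj1_sig f1 (pg P i) = proj1_sig f2 (pg P i)) ->
  forall y, proj1_sig f1 y = proj1_sig f2 y.
Proof.
move=> H.
have [f [_ Hu]] := puniv P B (fun i => proj1_sig f1 (pg P i))
  (fun p Hp => ltac:(rewrite -!hom_eval; congr (proj1_sig f1); exact: psat)).
move=> y; rewrite (Hu f1) // (Hu f2) //.
Qed.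

Lemma hom_unique_eq (A : algebra S) (P : Pres A) (B : model E) (f1 f2 : hom A B) :
  (forall i, proj1_sig f1 (pg P i) = proj1_sig f2 (pg P i)) -> f1 = f2.
Proof. move=> H; apply: hom_ext; exact: hom_unique H. Qed.

Lemma proj_eval (A : algebra S) (P : A -> Prop) (HP : op_closed P) X
  (v : X -> subalgebra HP) t :
  proj1_sig (eval v t) = eval (fun x => proj1_sig (v x)) t.
Proof.
elim: t => [x|o a IH] //=.
congr (interp A o); apply: functional_extensionality => i; exact: IH.
Qed.

Lemma sub_sat (A : model E) (P : A -> Prop) (HP : op_closed P) :
  satisfies (subalgebra HP).
Proof.
move=> s t Hst v.
have H := model_sat Hst (fun x => proj1_sig (v x)).
move: H; rewrite -!proj_eval; case: (eval v s) => x hx; case: (eval v t) => y hy /= Hxy.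
subst y; f_equal; exact: proof_irrelevance.
Qed.

Lemma generated (A : model E) (P : Pres A) (x : A) :
  exists t, eval (pg P) t = x.
Proof.
pose Pr := fun y : A => exists t, eval (pg P) t = y.
have HP : op_closed Pr.
  move=> o a Ha.
  exists (App o (fun i => proj1_sig (cid (Ha i)))) => /=.
  congr (interp A o); apply: functional_extensionality => i.
  by case: (cid (Ha i)).
pose Sub := Model (@sub_sat A Pr HP).
have [f [Hf _]] := puniv P Sub (fun i => exist Pr (pg P i) (ex_intro _ (Var i) erefl))
  (fun p Hp => ltac:(apply: eq_sig_hprop; [move=> ?; exact: proof_irrelevance|];
                     rewrite !proj_eval /=; exact: psat)).
have Hinc : is_hom (A := subalgebra HP) (B := A) (fun y => proj1_sig y) by [].
pose inc : hom (subalgebra HP) A := exist _ _ Hinc.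
have := @hom_unique A P A (hom_comp inc f) (hom_id _).
move=> /(_ _ x) /= <-; last by move=> i /=; rewrite Hf.
by case: (proj1_sig f x).
Qed.

Lemma fp_of_pres (A : algebra S) (X : Type) (lx : list X)
  (Hx : forall x, List.In x lx) (R : list (term S X * term S X)) (g : X -> A) :
  (forall p, List.In p R -> eval g p.1 = eval g p.2) ->
  (forall (B : model E) (h : X -> B),
      (forall p, List.In p R -> eval h p.1 = eval h p.2) ->
      exists f : hom A B,
        (forall x, proj1_sig f (g x) = h x) /\
        (forall f' : hom A B, (forall x, proj1_sig f' (g x) = h x) ->
           forall y, proj1_sig f' y = proj1_sig f y)) ->
  fin_presented A.
Proof.
move=> Hsat Huniv.
pose N := size lx.
pose phi : 'I_N -> X := fun i => tnth (in_tuple lx) i.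
pose psi : X -> 'I_N := fun x => proj1_sig (cid (In_tnth (Hx x))).
have Hpp : forall x, phi (psi x) = x.
  by move=> x; rewrite /phi /psi; case: (cid _).
clearbody phi psi.
pose R' := List.app (List.map (fun p => (tmap psi p.1, tmap psi p.2)) R)
             (List.map (fun i => (Var i, Var (psi (phi i)))) (ord_list N)).
exists N, R', (fun i => g (phi i)); split.
  move=> p /List.in_app_iff [/List.in_map_iff [q [<- Hq]]|/List.in_map_iff [i [<- _]]] /=.
    have Hg : forall t, eval (fun x => g (phi (psi x))) t = eval g t.
      by move=> t; apply: eval_ext => x; rewrite Hpp.
    rewrite !eval_map !Hg; exact: Hsat.
  by rewrite Hpp.
move=> B h HR.
have HR1 : forall p, List.In p R -> eval (fun x => h (psi x)) p.1 = eval (fun x => h (psi x)) p.2.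
  move=> p Hp; rewrite -(eval_map h psi p.1) -(eval_map h psi p.2); apply: (HR (tmap psi p.1, tmap psi p.2)).
  apply/List.in_app_iff; left; apply/List.in_map_iff; by exists p.
have HR2 : forall i, h (psi (phi i)) = h i.
  move=> i; symmetry; apply: (HR (Var i, Var (psi (phi i)))).
  apply/List.in_app_iff; right; apply/List.in_map_iff; exists i; split => //; exact: ord_listP.
have [f [Hf Hu]] := Huniv B _ HR1.
exists f; split; first by move=> i; rewrite Hf HR2.
move=> f' Hf'; apply: Hu => x; by rewrite -(Hpp x) Hf' Hpp.
Qed.

Lemma fpmono_inj (A B : fp_obj E) (f : hom (proj1_sig A) (proj1_sig B)) :
  (forall (Z : fp_obj E) (g h : hom (proj1_sig Z) (proj1_sig A)),
      hom_comp f g = hom_comp f h -> g = h) ->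
  injective (proj1_sig f).
Proof.
move=> Hm x y Hxy.
pose R1 : list (term S 'I_1 * term S 'I_1) := nil.
pose F := Fmodel (fun s t : term S 'I_1 => List.In (s, t) R1).
have Ffp : fin_presented F.
  apply: (@fp_of_pres (Falg (fun s t : term S 'I_1 => List.In (s, t) R1)) _ (ord_list 1) (@ord_listP 1) R1 (fun x => cls _ (Var x))).
    by [].
  move=> C h HR; have [f0 [H1 H2]] := @Funiv E _ (fun s t : term S 'I_1 => List.In (s, t) R1) C h (fun s t H => HR (s, t) H); by exists f0.
have [kx [Hkx _]] := @Funiv E _ (fun s t : term S 'I_1 => List.In (s, t) R1) (proj1_sig A) (fun _ => x) (fun _ _ (H : List.In _ nil) => match H with end).
have [ky [Hky _]] := @Funiv E _ (fun s t : term S 'I_1 => List.In (s, t) R1) (proj1_sig A) (fun _ => y) (fun _ _ (H : List.In _ nil) => match H with end).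
have E1 : kx = ky.
  apply: (Hm (exist _ F Ffp)).
  apply: hom_ext => q /=.
  have [f0 [_ Hu]] := @Funiv E _ (fun s t : term S 'I_1 => List.In (s, t) R1) (proj1_sig B) (fun _ => proj1_sig f x) (fun _ _ (H : List.In _ nil) => match H with end).
  transitivity (proj1_sig f0 q).
    apply: (Hu (hom_comp f kx)) => i /=; by rewrite Hkx.
  symmetry; apply: (Hu (hom_comp f ky)) => i /=; by rewrite Hky.
by rewrite -(Hkx ord0) -(Hky ord0) E1.
Qed.

End Pres.
Arguments pn {E A} p0.
Arguments pR {E A} p0.
Arguments pg {E A} p0 _.
Arguments psat {E A} p0 _ _.
Arguments puniv {E A} p0 B h _.


Definition lnth (T : Type) (l : list T) : 'I_(List.length l) -> T :=
  match l return 'I_(List.length l) -> T with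
  | nil => fun k => False_rect T (match k with Ordinal m Hm => ltac:(by []) end)
  | d :: l' => fun k => List.nth (nat_of_ord k) (d :: l') d
  end.
Arguments lnth {T} l _.

Lemma In_lnth (T : Type) (l : list T) (x : T) :
  List.In x l -> exists k : 'I_(List.length l), lnth l k = x.
Proof.
case: l => [|d l] //= H.
have [n [Hn Hx]] := List.In_nth (d :: l) x d H.
have Hn' : n < List.length (d :: l) by apply/ltP.
by exists (Ordinal Hn').
Qed.

Section Colim.
Variable E : eq_theory.
Notation S := (th_sig E).
Variable Idx : Type.
Variable li : list Idx.
Hypothesis Hli : forall j, List.In j li.
Variable Dob : Idx -> fp_obj E.

Record Edge := MkEdge {
  ec : fp_obj E; ea : Idx; eb : Idx;
  e1 : hom (proj1_sig ec) (proj1_sig (Dob ea));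
  e2 : hom (proj1_sig ec) (proj1_sig (Dob eb)) }.

Variable edges : list Edge.

Lemma colim_exists : exists (L : fp_obj E)
  (legs : forall j, hom (proj1_sig (Dob j)) (proj1_sig L)),
  (forall e, List.In e edges -> forall x,
     proj1_sig (legs (ea e)) (proj1_sig (e1 e) x) =
     proj1_sig (legs (eb e)) (proj1_sig (e2 e) x)) /\
  (forall (Y : model E) (legs' : forall j, hom (proj1_sig (Dob j)) Y),
     (forall e, List.In e edges -> forall x,
        proj1_sig (legs' (ea e)) (proj1_sig (e1 e) x) =
        proj1_sig (legs' (eb e)) (proj1_sig (e2 e) x)) ->
     exists u : hom (proj1_sig L) Y,
       (forall j x, proj1_sig u (proj1_sig (legs j) x) = proj1_sig (legs' j) x) /\
       (forall u' : hom (proj1_sig L) Y,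
          (forall j x, proj1_sig u' (proj1_sig (legs j) x) = proj1_sig (legs' j) x) ->
          forall y, proj1_sig u' y = proj1_sig u y)).
Proof.
pose P := fun j => pres_of (proj2_sig (Dob j)).
pose Pc := fun e : Edge => pres_of (proj2_sig (ec e)).
pose M := List.length li.
pose X := {k : 'I_M & 'I_(pn (P (lnth li k)))}.
pose pos := fun j => proj1_sig (cid (In_lnth (Hli j))).
have posP : forall j, lnth li (pos j) = j.
  by move=> j; rewrite /pos; case: (cid _).
pose injX := fun k j (e : lnth li k = j) (i : 'I_(pn (P j))) =>
  (existT (fun k => 'I_(pn (P (lnth li k)))) k
     (eq_rect_r (fun y => 'I_(pn (P y))) i e) : X).
have injXP : forall (Z : Type) (G : forall j, 'I_(pn (P j)) -> Z) k j
   (e : lnth li k = j) i,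
   G (lnth li (projT1 (injX k j e i))) (projT2 (injX k j e i)) = G j i.
  by move=> Z G k j e i; subst j.
pose inj := fun j i => injX (pos j) j (posP j) i.
have Hinj : forall (Z : Type) (G : forall j, 'I_(pn (P j)) -> Z) j i,
   G (lnth li (projT1 (inj j i))) (projT2 (inj j i)) = G j i.
  by move=> Z G j i; rewrite /inj injXP.
clearbody inj injX.
pose tau1 := fun e i => proj1_sig (cid (generated (P (ea e)) (proj1_sig (e1 e) (pg (Pc e) i)))).
have tau1P : forall e i, eval (pg (P (ea e))) (tau1 e i) = proj1_sig (e1 e) (pg (Pc e) i).
  by move=> e i; rewrite /tau1; case: (cid _).
pose tau2 := fun e i => proj1_sig (cid (generated (P (eb e)) (proj1_sig (e2 e) (pg (Pc e) i)))).
have tau2P : forall e i, eval (pg (P (eb e))) (tau2 e i) = proj1_sig (e2 e) (pg (Pc e) i).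
  by move=> e i; rewrite /tau2; case: (cid _).
clearbody tau1 tau2.
pose lx := List.flat_map (fun k => List.map (fun i => (existT _ k i : X)) (ord_list _)) (ord_list M).
have Hlx : forall x, List.In x lx.
  case=> k i; apply/List.in_flat_map; exists k; split; first exact: ord_listP.
  apply/List.in_map_iff; exists i; split => //; exact: ord_listP.
pose R1 := List.flat_map (fun j => List.map (fun p => (tmap (inj j) p.1, tmap (inj j) p.2)) (pR (P j))) li.
pose R2 := List.flat_map (fun e => List.map (fun i => (tmap (inj (ea e)) (tau1 e i), tmap (inj (eb e)) (tau2 e i))) (ord_list (pn (Pc e)))) edges.
pose R3 := List.flat_map (fun k => List.map (fun i => ((Var (existT _ k i : X) : term S X), (Var (inj (lnth li k) i) : term S X))) (ord_list _)) (ord_list M).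
pose Rl := List.app R1 (List.app R2 R3).
pose Rel := fun s t => List.In (s, t) Rl.
have InR1 : forall j p, List.In p (pR (P j)) -> Rel (tmap (inj j) p.1) (tmap (inj j) p.2).
  move=> j p Hp; apply/List.in_app_iff; left; apply/List.in_flat_map; exists j; split => //.
  apply/List.in_map_iff; by exists p.
have InR2 : forall e i, List.In e edges -> Rel (tmap (inj (ea e)) (tau1 e i)) (tmap (inj (eb e)) (tau2 e i)).
  move=> e i He; apply/List.in_app_iff; right; apply/List.in_app_iff; left.
  apply/List.in_flat_map; exists e; split => //.
  apply/List.in_map_iff; exists i; split => //; exact: ord_listP.
have InR3 : forall k i, Rel (Var (existT _ k i : X)) (Var (inj (lnth li k) i)).
  move=> k i; apply/List.in_app_iff; right; apply/List.in_app_iff; right.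
  apply/List.in_flat_map; exists k; split; first exact: ord_listP.
  apply/List.in_map_iff; exists i; split => //; exact: ord_listP.
have RelP : forall s t, Rel s t -> List.In (s, t) Rl by [].

pose Fa := Fmodel Rel.
have Ffp : fin_presented Fa.
  apply: (@fp_of_pres E (Falg Rel) X lx Hlx Rl (fun x => cls Rel (Var x))).
    by move=> [s t] Hst; apply: gen_rel.
  move=> C h HR; have [f0 [H1 H2]] := @Funiv E X Rel C h (fun s t H => HR (s, t) H).
  by exists f0.
pose L : fp_obj E := exist _ Fa Ffp.
pose gen := (fun x : X => cls Rel (Var x)) : X -> carrier (Falg Rel).
have genE : forall Y (v : Y -> X) (t : term S Y), eval (A := Falg Rel) (fun y => gen (v y)) t = eval (A := Falg Rel) gen (tmap v t).
  by move=> Y v t; rewrite eval_map.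
have legsT : forall j, {f : hom (proj1_sig (Dob j)) (proj1_sig L) |
    forall i, proj1_sig f (pg (P j) i) = gen (inj j i)}.
  move=> j.
  have resp : forall p, List.In p (pR (P j)) ->
      eval (fun i => gen (inj j i)) p.1 = eval (fun i => gen (inj j i)) p.2.
    move=> p Hp; rewrite (genE _ (inj j) p.1) (genE _ (inj j) p.2); apply: gen_rel; exact: InR1.
  case: (cid (puniv (P j) Fa _ resp)) => f [Hf _]; by exists f.
pose legs := fun j => proj1_sig (legsT j).
have legsP : forall j i, proj1_sig (legs j) (pg (P j) i) = gen (inj j i).
  by move=> j i; rewrite /legs; case: (legsT j).
clearbody legs.
exists L, legs; split.
  move=> e He x.
  apply: (@hom_unique _ _ (Pc e) Fa (hom_comp (legs (ea e)) (e1 e)) (hom_comp (legs (eb e)) (e2 e))) => i /=.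
  have HE : forall j (t : term S 'I_(pn (P j))),
      eval (fun x => proj1_sig (legs j) (pg (P j) x)) t = eval (A := Falg Rel) gen (tmap (inj j) t).
    move=> j t; rewrite -(genE _ (inj j) t); apply: eval_ext => y; exact: legsP.
  rewrite -tau1P -tau2P (hom_eval (legs (ea e))) (hom_eval (legs (eb e))) !HE.
  apply: gen_rel; exact: InR2.
move=> Y legs' Hedge.
pose h := fun x : X => proj1_sig (legs' (lnth li (projT1 x))) (pg (P (lnth li (projT1 x))) (projT2 x)).
have h_inj : forall j i, h (inj j i) = proj1_sig (legs' j) (pg (P j) i).
  move=> j i; rewrite /h.
  exact: (Hinj (model_alg Y : Type) (fun j i => proj1_sig (legs' j) (pg (P j) i)) j i).
have hE : forall j t, eval (fun i => h (inj j i)) t = proj1_sig (legs' j) (eval (pg (P j)) t).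
  move=> j t; rewrite hom_eval; apply: eval_ext => i; exact: h_inj.
have Hresp : forall s t, Rel s t -> eval h s = eval h t.
  move=> s t /RelP /List.in_app_iff [|/List.in_app_iff []].
  - case/List.in_flat_map => j [_ /List.in_map_iff [p [[<- <-] Hp]]].
    rewrite (eval_map h (inj j) p.1) (eval_map h (inj j) p.2) !hE; congr (proj1_sig (legs' j)); exact: psat.
  - case/List.in_flat_map => e [He /List.in_map_iff [i [[<- <-] _]]].
    rewrite (eval_map h (inj (ea e))) (eval_map h (inj (eb e))) !hE tau1P tau2P; exact: Hedge.
  - case/List.in_flat_map => k [_ /List.in_map_iff [i [[<- <-] _]]].
    by rewrite /= h_inj.
have [u [Hu1 Hu2]] := @Funiv E X Rel Y h Hresp.
exists u; split.
  move=> j x.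
  apply: (@hom_unique _ _ (P j) Y (hom_comp u (legs j)) (legs' j)) => i /=.
  by rewrite legsP Hu1 h_inj.
move=> u' Hu' y; apply: Hu2 => x.
case: x => k i.
rewrite (cls_eq (c_rel (InR3 k i))).
have := legsP (lnth li k) i; rewrite /gen => <-; rewrite Hu'; by [].
Qed.

End Colim.


Lemma finite_limits (E : eq_theory) : has_finite_limits (Alg_fp_op E).
Proof.
move=> J [[lo Hlo] Hhom] D.
pose lh := fun a b => proj1_sig (cid (Hhom a b)).
have lhP : forall a b (u : Hom a b), List.In u (lh a b).
  by move=> a b u; rewrite /lh; case: (cid _) => l Hl; apply: Hl.
clearbody lh.
pose Dob := fun j : J => (D j : fp_obj E).
pose mk := fun a b (u : @Hom J a b) =>
  @MkEdge E (Obj J) Dob (D b) a b (Fmap D u : hom (proj1_sig (D b)) (proj1_sig (D a))) (hom_id _).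
pose edges := List.flat_map (fun a => List.flat_map (fun b => List.map (mk a b) (lh a b)) lo) lo.
have [L [legs [Hcone Huniv]]] := @colim_exists E (Obj J) lo Hlo Dob edges.
have Hin : forall a b u, List.In (mk a b u) edges.
  move=> a b u; apply/List.in_flat_map; exists a; split => //.
  apply/List.in_flat_map; exists b; split => //; apply/List.in_map_iff; by exists u.
exists L, legs; split.
  move=> a b u; apply: hom_ext => x /=.
  exact: (Hcone _ (Hin a b u) x).
move=> Y legs' Hc.
have Hc' : forall e, List.In e edges -> forall x,
    proj1_sig (legs' (ea e)) (proj1_sig (e1 e) x) = proj1_sig (legs' (eb e)) (proj1_sig (e2 e) x).
  move=> e /List.in_flat_map [a [_ /List.in_flat_map [b [_ /List.in_map_iff [u [<- _]]]]]] x /=.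
  have := Hc a b u; move/(f_equal (fun f : hom _ _ => proj1_sig f x)) => /= ->; by [].
have [u [Hu1 Hu2]] := Huniv (proj1_sig Y) legs' Hc'.
exists u; split.
  move=> j; apply: hom_ext => x /=; exact: Hu1.
move=> u' Hu'; apply: hom_ext => y; apply: Hu2 => j x.
by rewrite -(Hu' j).
Qed.


Lemma pullback_stable (E : eq_theory) : IT E -> epis_pullback_stable (Alg_fp_op E).
Proof.
move=> HIT A B C1 P f g p1 p2 Hepi [Hsq Hpb].
have finj := @fpmono_inj E B A f (fun Z g1 g2 H => Hepi Z g1 g2 H).
have [D [h [h' [h'inj Hcomm]]]] := HIT (proj1_sig B) (proj1_sig C1) (proj1_sig A) g f finj.
pose Dob := fun b : bool => if b then A else C1.
pose ed := @MkEdge E bool Dob B true false f g.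
have Hli : forall b : bool, List.In b [:: true; false] by case; [left|right; left].
have [L [legs [Hcone Huniv]]] := @colim_exists E bool [:: true; false] Hli Dob [:: ed].
have Hed := Hcone ed (or_introl erefl).
have Hsq' : Defs.comp (f : @Hom (Alg_fp_op E) A B) (legs true : @Hom (Alg_fp_op E) L A) = Defs.comp (g : @Hom (Alg_fp_op E) C1 B) (legs false : @Hom (Alg_fp_op E) L C1).
  apply: hom_ext => x /=; exact: (Hed x).
have [u [[Hu1 Hu2] _]] := Hpb L (legs true) (legs false) Hsq'.
pose legs' := fun b : bool => if b as b return hom (proj1_sig (Dob b)) D then h else h'.
have [k [Hk _]] := Huniv D legs'
  (fun e He => ltac:(case: He => [Ee|[]]; subst e; move=> x /=; by rewrite Hcomm)).
have p2inj : injective (proj1_sig (p2 : hom (proj1_sig C1) (proj1_sig P))).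
  move=> x y Hxy; apply: h'inj.
  have Hx : forall z, proj1_sig h' z = proj1_sig k (proj1_sig u (proj1_sig p2 z)).
    move=> z; have := f_equal (fun F : hom _ _ => proj1_sig F z) Hu2 => /= ->.
    by rewrite (Hk false z).
  by rewrite !Hx Hxy.
move=> Z g1 g2 H; apply: hom_ext => z; apply: p2inj.
exact: (f_equal (fun F : hom _ _ => proj1_sig F z) H).
Qed.


Lemma In_lnth_tnth (T : Type) (l : list T) (k : 'I_(List.length l)) :
  List.In (lnth l k) l.
Proof.
case: l k => [|d l] [k Hk] //=.
change (List.In (List.nth k (d :: l) d) (d :: l)); apply: List.nth_In; exact/ltP.
Qed.

Lemma factorization (E : eq_theory) : coherent E -> epi_regmono_factorization (Alg_fp_op E).
Proof.
move=> HC A B f.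
pose S := th_sig E.
pose Pb := pres_of (proj2_sig B).
pose Pr := fun a : proj1_sig A => exists b : proj1_sig B, proj1_sig f b = a.
have HP : op_closed Pr.
  move=> o a Ha.
  exists (interp (proj1_sig B) o (fun i => proj1_sig (cid (Ha i)))).
  rewrite (proj2_sig f); congr (interp _ o); apply: functional_extensionality => i.
  by case: (cid (Ha i)).
have Hfg : fin_generated_pred Pr.
  exists (pn Pb), (fun i => proj1_sig f (pg Pb i)) => x; split.
    case=> b <-; have [t <-] := generated Pb b; exists t; symmetry; exact: hom_eval.
  case=> t <-; exists (eval (pg Pb) t); exact: hom_eval.
have Ifp := HC (proj1_sig A) (proj2_sig A) Pr HP Hfg.
pose Imod := Model (@sub_sat E (proj1_sig A) Pr HP).
pose I : Alg_fp_op E := exist _ Imod Ifp.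
have sig_ext : forall x y : subalgebra HP, proj1_sig x = proj1_sig y -> x = y.
  move=> [x hx] [y hy] /= Exy; subst y; f_equal; exact: proof_irrelevance.
have He : is_hom (A := subalgebra HP) (B := proj1_sig A) (fun y => proj1_sig y) by [].
pose e : hom (subalgebra HP) (proj1_sig A) := exist _ _ He.
have Hm : is_hom (A := proj1_sig B) (B := subalgebra HP)
    (fun b => exist Pr (proj1_sig f b) (ex_intro _ b erefl)).
  move=> o a; apply: sig_ext => /=; exact: (proj2_sig f).
pose m : hom (proj1_sig B) (subalgebra HP) := exist _ _ Hm.
exists I, (e : @Hom (Alg_fp_op E) A I), (m : @Hom (Alg_fp_op E) I B); split; [|split].
- move=> Z g1 g2 H; apply: hom_ext => z; apply: sig_ext.
  exact: (f_equal (fun F : hom _ _ => proj1_sig F z) H).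
- pose Pi := pres_of Ifp.
  pose bpre := fun i => proj1_sig (cid (proj2_sig (pg Pi i))).
  have mb : forall i, proj1_sig m (bpre i) = pg Pi i.
    move=> i; apply: sig_ext => /=; rewrite /bpre; by case: (cid _).
  clearbody bpre.
  pose sg := fun j => proj1_sig (cid (@generated E Imod Pi (proj1_sig m (pg Pb j)))).
  have sgP : forall j, eval (pg Pi) (sg j) = proj1_sig m (pg Pb j).
    by move=> j; rewrite /sg; case: (cid _).
  clearbody sg.
  pose K := ('I_(List.length (pR Pi)) + 'I_(pn Pb))%type.
  pose pk := fun k : K => match k with
    | inl r => ((eval bpre (lnth (pR Pi) r).1), (eval bpre (lnth (pR Pi) r).2))
    | inr j => (pg Pb j, eval bpre (sg j)) end.
  have Hkey : forall k, proj1_sig m (pk k).1 = proj1_sig m (pk k).2.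
    have Hmb : forall t, proj1_sig m (eval bpre t) = eval (pg Pi) t.
      move=> t; rewrite (hom_eval m); apply: eval_ext => i; exact: mb.
    case=> [r|j].
      change (proj1_sig m (eval bpre (lnth (pR Pi) r).1) = proj1_sig m (eval bpre (lnth (pR Pi) r).2)).
      rewrite !Hmb; apply: psat; exact: In_lnth_tnth.
    change (proj1_sig m (pg Pb j) = proj1_sig m (eval bpre (sg j))).
    by rewrite Hmb sgP.
  pose R0 : list (term S K * term S K) := nil.
  pose Rel0 := fun s t => List.In (s, t) R0.
  pose Zalg := Fmodel Rel0.
  pose lK := List.app (List.map (@inl _ _) (ord_list (List.length (pR Pi))))
                      (List.map (@inr _ _) (ord_list (pn Pb))) : list K.
  have HlK : forall k, List.In k lK.
    case=> [r|j]; apply/List.in_app_iff; [left|right]; apply/List.in_map_iff;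
      [exists r|exists j]; split => //; exact: ord_listP.
  have Zfp : fin_presented Zalg.
    apply: (@fp_of_pres E (Falg Rel0) K lK HlK R0 (fun x => cls Rel0 (Var x))) => //.
    move=> C h HR; have [f0 [H1 H2]] := @Funiv E K Rel0 C h (fun s t H => HR (s, t) H).
    by exists f0.
  have [zg [Hzg _]] := @Funiv E K Rel0 (proj1_sig B) (fun k => (pk k).1) (fun _ _ (H : List.In _ nil) => match H with end).
  have [zh [Hzh _]] := @Funiv E K Rel0 (proj1_sig B) (fun k => (pk k).2) (fun _ _ (H : List.In _ nil) => match H with end).
  pose Zobj : Alg_fp_op E := exist _ Zalg Zfp.
  exists Zobj, (zg : @Hom (Alg_fp_op E) B Zobj), (zh : @Hom (Alg_fp_op E) B Zobj); split.
    apply: hom_ext => z.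
    have [f0 [_ Hu]] := @Funiv E K Rel0 Imod (fun k => proj1_sig m (pk k).1) (fun _ _ (H : List.In _ nil) => match H with end).
    transitivity (proj1_sig f0 z).
      apply: (Hu (hom_comp m zg)) => k /=; by rewrite Hzg.
    symmetry; apply: (Hu (hom_comp m zh)) => k; change (proj1_sig m (proj1_sig zh (cls Rel0 (Var k))) = proj1_sig m (pk k).1); by rewrite Hzh -Hkey.
  move=> X x Hx.
  have Hxk : forall k, proj1_sig x (pk k).1 = proj1_sig x (pk k).2.
    move=> k; have := f_equal (fun F : hom (Falg Rel0) (proj1_sig X) => proj1_sig F (cls Rel0 (Var k))) Hx.
    by rewrite /= Hzg Hzh.
  have resp : forall p, List.In p (pR Pi) ->
      eval (fun i => proj1_sig x (bpre i)) p.1 = eval (fun i => proj1_sig x (bpre i)) p.2.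
    move=> p Hp; case: (In_lnth Hp) => r Hr; subst p; rewrite -!(hom_eval x); exact: (Hxk (inl r)).
  have [u [Hu1 Hu2]] := puniv Pi (proj1_sig X) _ resp.
  exists (u : @Hom (Alg_fp_op E) X I); split.
    apply: hom_ext => y; apply: (@hom_unique _ _ Pb (proj1_sig X) (hom_comp u m) x) => j; change (proj1_sig u (proj1_sig m (pg Pb j)) = proj1_sig x (pg Pb j)).
    rewrite -sgP (hom_eval u).
    rewrite (@eval_ext _ _ _ (fun i => proj1_sig u (pg Pi i)) (fun i => proj1_sig x (bpre i))); last exact: Hu1.
    rewrite -(hom_eval x); symmetry; exact: (Hxk (inr j)).
  move=> u' Hu'; apply: hom_ext => y; apply: Hu2 => i.
  rewrite -mb; exact: (f_equal (fun F : hom _ _ => proj1_sig F (bpre i)) Hu').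
- by apply: hom_ext.
Qed.


Theorem mainTheorem5 (E : eq_theory) :
  IT E -> coherent E -> r_regular (Alg_fp_op E).
Proof.
move=> HIT HC; split; [exact: finite_limits | exact: pullback_stable | exact: factorization].
Qed.
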